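(* Let $K$ and $K'$ be two CMIs on $X_1,\dots,X_n$ (not necessarily in pure form). Then $K\sim K'$ if and only if $\mathrm{can}(\mathrm{pur}(K))=\mathrm{can}(\mathrm{pur}(K'))$.
   Context: Setting: $X_1,\dots,X_n$ are jointly distributed discrete random variables with $H(X_i)<\infty$ for all $i$; the joint distribution is otherwise unspecified. Write $\mathcal N_n=\{1,\dots,n\}$, $X_\alpha=(X_i,i\in\alpha)$, and $X_\emptyset$ is a constant. A CMI is a pair $K=(C,\langle Q_1,\dots,Q_k\rangle)$ with $k\ge0$, $C\subseteq\mathcal N_n$, $\langle Q_1,\dots,Q_k\rangle$ an unordered multiset of subsets of $\mathcal N_n$. For a given joint distribution, $K$ is valid if $\sum_{i=1}^k H(X_{Q_i}|X_C)-H(X_{Q_1},\dots,X_{Q_k}|X_C)=0$. Empty members may be deleted. Two CMIs are equal if conditioning sets and multisets coincide. $K\sim K'$ means that for every joint distribution both are valid or both invalid. Degenerate CMIs (valid for every distribution) are all identified and written $(\cdot,\langle\ \rangle)$. Pure form: $\mathrm{pur}(K)=(C,\langle Q_i\setminus C: Q_i\setminus C\ne\emptyset\rangle)$ (with multiplicity). A CMI is in pure form if all $Q_i\neq\emptyset$ and $Q_i\cap C=\emptyset$. Canonical form of a pure $K=(C,\langle Q_1,\dots,Q_k\rangle)$: if $k\ge2$, $\mathbb I_K$ is the set of indices lying in at least two members (distinct positions) of the collection; $\mathbb I_K=\emptyset$ if $k\le1$. Let $P_1,\dots,P_t$ be the nonempty sets among $Q_i\setminus\mathbb I_K$ (with multiplicity).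 Then $\mathrm{can}(K)=(\cdot,\langle\ \rangle)$ if $k\le1$; $(C,\langle\mathbb I_K,\mathbb I_K\rangle)$ if $k\ge2,\mathbb I_K\ne\emptyset,t\le1$; $(C,\langle P_1,\dots,P_t\rangle)$ if $k\ge2,\mathbb I_K=\emptyset$; $(C,\langle\mathbb I_K,\mathbb I_K,P_1,\dots,P_t\rangle)$ if $k\ge2,\mathbb I_K\ne\emptyset,t\ge2$. *)

(* Defs.v *)
From HB Require Import structures.
From mathcomp Require Import all_boot all_order all_algebra.
From mathcomp Require Import boolp classical_sets functions reals ereal esum exp.
From mathcomp Require Import Rstruct.
From Stdlib Require Rdefinitions.

Set Implicit Arguments.
Unset Strict Implicit.
Unset Printing Implicit Defensive.

Import Order.TTheory GRing.Theory Num.Theory.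
Local Open Scope classical_set_scope.
Local Open Scope ring_scope.

(* A CMI K = (C, <Q_1,...,Q_k>); the multiset is represented by a list,
   considered up to permutation (perm_eq). *)
Record cmi (n : nat) := CMI { cmi_cond : {set 'I_n}; cmi_mems : seq {set 'I_n} }.

Definition pur n (K : cmi n) : cmi n :=
  CMI (cmi_cond K)
      [seq Q :\: cmi_cond K | Q <- cmi_mems K & Q :\: cmi_cond K != finset.set0].

Definition II n (qs : seq {set 'I_n}) : {set 'I_n} :=
  [set i | leq 2 (count (fun Q : {set 'I_n} => i \in Q) qs)].

(* Canonical forms: None stands for the degenerate CMI (.,< >);
   Some (C, s) for the CMI (C, s). *)
Definition canform n := option ({set 'I_n} * seq {set 'I_n}).

Definition can n (K : cmi n) : canform n :=
  let C := cmi_cond K in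
  let qs := cmi_mems K in
  let I := II qs in
  let Ps := [seq Q :\: I | Q <- qs & Q :\: I != finset.set0] in
  if leq (size qs) 1 then None
  else if I == finset.set0 then Some (C, Ps)
  else if leq (size Ps) 1 then Some (C, [:: I; I])
  else Some (C, I :: I :: Ps).

Definition canform_eq n (a b : canform n) : Prop :=
  match a, b with
  | None, None => True
  | Some (C, s), Some (C', s') => C = C' /\ perm_eq s s'
  | _, _ => False
  end.

(* A joint distribution of discrete X_0,...,X_{n-1}, each X_i taking   *)
(* values in a countable alphabet (coded by nat), is a probability    *)
(* mass function p on outcomes x : {ffun 'I_n -> nat}.                *)

Section Entropy.
Variable R : realType.
Variable n : nat.
Local Open Scope ereal_scope.

Definition outcome := {ffun 'I_n -> nat}.

(* restriction of an outcome to the coordinates in A (others set to 0):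
   this codes the value of X_A *)
Definition restr (A : {set 'I_n}) (x : outcome) : outcome :=
  [ffun i => if i \in A then x i else O].

Definition marg (p : outcome -> R) (A : {set 'I_n}) (y : outcome) : \bar R :=
  \esum_(x in [set x | restr A x = y]) (p x)%:E.

Definition eta (q : R) : R := - (q * ln q).

Definition entropy (p : outcome -> R) (A : {set 'I_n}) : \bar R :=
  \esum_(y in [set: outcome]) (eta (fine (marg p A y)))%:E.

Definition is_joint_dist (p : outcome -> R) : Prop :=
  (forall x, (0 <= p x)%R) /\
  \esum_(x in [set: outcome]) (p x)%:E = 1 /\
  (forall i : 'I_n, entropy p [set i] < +oo).

Definition centropy (p : outcome -> R) (A C : {set 'I_n}) : R :=
  (fine (entropy p (A :|: C)) - fine (entropy p C))%R.

Definition cmi_valid (p : outcome -> R) (K : cmi n) : Prop :=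
  ((\sum_(Q <- cmi_mems K) centropy p Q (cmi_cond K))
   - centropy p (\bigcup_(Q <- cmi_mems K) Q) (cmi_cond K) = 0)%R.

End Entropy.

Definition cmi_equiv n (K K' : cmi n) : Prop :=
  forall p : outcome n -> Rdefinitions.R,
    is_joint_dist p -> (cmi_valid p K <-> cmi_valid p K').

(* Main.v *)
Require Import Defs.
From HB Require Import structures.
From mathcomp Require Import all_boot all_order all_algebra.
From mathcomp Require Import zify.
Set Implicit Arguments.
Unset Strict Implicit.
Unset Printing Implicit Defensive.

Module CombPoly.
Import Order.TTheory GRing.Theory Num.Theory.
Local Open Scope ring_scope.

Section Poly.
Variables (R : realDomainType) (n : nat).
Implicit Types (A B X I W : {set 'I_n}) (L : seq {set 'I_n}).

Definition UU L : {set 'I_n} := \bigcup_(Q <- L) Q.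

Lemma mem_UU L x : (x \in UU L) = has (fun Q : {set 'I_n} => x \in Q) L.
Proof.
rewrite /UU; elim: L => [|Q L IH]; first by rewrite big_nil in_set0.
by rewrite big_cons in_setU IH.
Qed.

Lemma UU_perm L L' : perm_eq L L' -> UU L = UU L'.
Proof. by move=> pL; rewrite /UU (perm_big _ pL). Qed.

Lemma UU_cons Q L : UU (Q :: L) = Q :|: UU L.
Proof. by rewrite /UU big_cons. Qed.

Variable f : {set 'I_n} -> R.
Hypothesis f0 : f set0 = 0.
Hypothesis fmono : forall A B, A \subset B -> f A <= f B.
Hypothesis fsub : forall A B, f (A :|: B) + f (A :&: B) <= f A + f B.

Definition val L : Prop := \sum_(Q <- L) f Q = f (UU L).

Lemma f_ge0 A : 0 <= f A.
Proof. by rewrite -f0 fmono ?sub0set. Qed.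

Lemma fU A B : f (A :|: B) <= f A + f B.
Proof. by apply: le_trans (fsub A B); rewrite lerDl f_ge0. Qed.

Lemma subadd L : f (UU L) <= \sum_(Q <- L) f Q.
Proof.
elim: L => [|Q L IH]; first by rewrite /UU !big_nil f0.
by rewrite UU_cons big_cons (le_trans (fU _ _)) // lerD2l.
Qed.

Lemma val_perm L L' : perm_eq L L' -> val L <-> val L'.
Proof. by move=> pL; rewrite /val (perm_big _ pL) (UU_perm pL). Qed.

Lemma drop_lemma W L : (forall X, f (X :\: W) = f X) ->
  val L <-> val [seq Q :\: W | Q <- L & Q :\: W != set0].
Proof.
move=> fW; rewrite /val.
have -> : \sum_(Q <- L) f Q = \sum_(Q <- [seq Q :\: W | Q <- L & Q :\: W != set0]) f Q.
  rewrite big_map big_filter [in RHS]big_mkcond /=; apply: eq_bigr => Q _.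
  by case: ifP => [_|/negbFE/eqP e]; rewrite -fW // e f0.
have -> : UU [seq Q :\: W | Q <- L & Q :\: W != set0] = UU L :\: W.
  apply/setP => x; rewrite mem_UU in_setD mem_UU has_map.
  apply/hasP/andP => [[Q]|[xW /hasP[Q QL xQ]]].
    rewrite mem_filter => /andP[_ QL] /=; rewrite in_setD => /andP[xW xQ].
    by split => //; apply/hasP; exists Q.
  exists Q => /=; last by rewrite in_setD xW xQ.
  rewrite mem_filter QL andbT; apply/set0Pn; exists x.
  by rewrite in_setD xW.
by rewrite fW.
Qed.

Lemma val_small L : (size L <= 1)%N -> val L.
Proof.
case: L => [|Q [|]] //= _; first by rewrite /val /UU !big_nil f0.
by rewrite /val /UU !big_cons !big_nil addr0 setU0.
Qed.

Lemma fIabs I X : f I = 0 -> f (I :|: X) = f X.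
Proof.
move=> fI; apply/eqP; rewrite eq_le (fmono (subsetUr I X)) andbT.
by rewrite (le_trans (fU _ _)) // fI add0r.
Qed.

Lemma fDabs I X : f I = 0 -> f (X :\: I) = f X.
Proof.
move=> fI; apply/eqP; rewrite eq_le (fmono (subsetDl X I)) /=.
rewrite -(fIabs (X :\: I) fI) fmono //.
by apply/subsetP => x xX; rewrite in_setU in_setD xX andbT; case: (x \in I).
Qed.

Lemma two_pos L x : (2 <= count (fun Q : {set 'I_n} => x \in Q) L)%N ->
  exists Qa Qb rest, [/\ perm_eq L (Qa :: Qb :: rest), x \in Qa & x \in Qb].
Proof.
move=> c2.
have /hasP[Qa QaL xQa] : has (fun Q : {set 'I_n} => x \in Q) L by rewrite has_count (leq_trans _ c2).
have pa := perm_to_rem QaL.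
move: c2; rewrite ((permP pa) _) /= xQa add1n ltnS => c1.
have /hasP[Qb QbL xQb] : has (fun Q : {set 'I_n} => x \in Q) (rem Qa L) by rewrite has_count.
exists Qa, Qb, (rem Qb (rem Qa L)); split => //.
by apply: (perm_trans pa); rewrite perm_cons; apply: perm_to_rem.
Qed.

Lemma II_zero L x : val L -> x \in II L -> f [set x] = 0.
Proof.
move=> vL; rewrite inE => /two_pos[Qa [Qb [rest [pL xa xb]]]].
move/(val_perm pL): vL; rewrite /val !big_cons !UU_cons => e.
have h1 : f Qa + f Qb <= f (Qa :|: Qb).
  have : f (Qa :|: (Qb :|: UU rest)) <= f (Qa :|: Qb) + \sum_(Q <- rest) f Q.
    by rewrite setUA (le_trans (fU _ _)) // lerD2l subadd.
  by rewrite -e addrA lerD2r.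
have h2 : f [set x] <= f (Qa :&: Qb).
  by apply: fmono; rewrite sub1set in_setI xa xb.
apply/eqP; rewrite eq_le f_ge0 andbT.
have := fsub Qa Qb.
rewrite -(lerD2l (f (Qa :|: Qb))) => h3.
apply: (le_trans h2); rewrite -(lerD2l (f (Qa :|: Qb))) addr0.
by apply: (le_trans (fsub Qa Qb)).
Qed.

Lemma f_singles I : (forall x, x \in I -> f [set x] = 0) -> f I = 0.
Proof.
move=> h; apply/eqP; rewrite eq_le f_ge0 andbT.
have -> : I = UU [seq [set x] | x <- enum I].
  apply/setP => y; rewrite mem_UU has_map; apply/idP/hasP => [yI|[z]].
    by exists y; rewrite ?mem_enum //= in_set1.
  by rewrite mem_enum /= in_set1 => zI /eqP ->.
apply: (le_trans (subadd _)); rewrite big_map big1_seq // => x /andP[_].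
by rewrite mem_enum => /h ->.
Qed.

Lemma key L : val L <->
  f (II L) = 0 /\ val [seq Q :\: II L | Q <- L & Q :\: II L != set0].
Proof.
split => [vL|[fI]].
  have fI : f (II L) = 0 by apply: f_singles => x; apply: II_zero.
  by split => //; apply/(drop_lemma L (fun X => fDabs X fI)).
by move/(drop_lemma L (fun X => fDabs X fI)).
Qed.

Lemma val_II I Ps : val (I :: I :: Ps) <-> f I = 0 /\ val Ps.
Proof.
rewrite /val !big_cons !UU_cons setUA setUid.
split => [e|[fI e]]; last by rewrite fI !add0r fIabs.
have fI : f I = 0.
  apply/eqP; rewrite eq_le f_ge0 andbT.
  have : f (I :|: UU Ps) <= f I + \sum_(Q <- Ps) f Q.
    by rewrite (le_trans (fU _ _)) // lerD2l subadd.
  by rewrite -e lerD2l gerDr.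
by split => //; move: e; rewrite fI !add0r fIabs.
Qed.

End Poly.

Section Can.
Variables (R : realDomainType) (n : nat).
Variable h : {set 'I_n} -> R.
Implicit Types (A B C X : {set 'I_n}) (L : seq {set 'I_n}).
Hypothesis hmono : forall A B, A \subset B -> h A <= h B.
Hypothesis hsub : forall A B, h (A :|: B) + h (A :&: B) <= h A + h B.

Definition fC C (A : {set 'I_n}) := h (A :|: C) - h C.

Lemma fC0 C : fC C set0 = 0.
Proof. by rewrite /fC set0U subrr. Qed.

Lemma fCmono C A B : A \subset B -> fC C A <= fC C B.
Proof. by move=> sAB; rewrite /fC lerD2r hmono // setSU. Qed.

Lemma fCsub C A B : fC C (A :|: B) + fC C (A :&: B) <= fC C A + fC C B.
Proof.
rewrite /fC addrACA [X in _ <= X]addrACA lerD2r.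
have := hsub (A :|: C) (B :|: C).
by rewrite setUACA setUid -setUIl.
Qed.

Definition cval (c : canform n) : Prop :=
  match c with None => True | Some (C, L) => val (fC C) L end.

Lemma canform_eq_cval a b : canform_eq a b -> (cval a <-> cval b).
Proof.
case: a => [[C L]|]; case: b => [[C' L']|] //= [<- pL].
exact: val_perm pL.
Qed.

Lemma valid_can (K : cmi n) :
  (\sum_(Q <- cmi_mems K) (h (Q :|: cmi_cond K) - h (cmi_cond K))
    - (h ((\bigcup_(Q <- cmi_mems K) Q) :|: cmi_cond K) - h (cmi_cond K)) = 0)
  <-> cval (can (pur K)).
Proof.
case: K => C qs /=.
have f0 := fC0 C; have fm := @fCmono C; have fs := fCsub C.
have -> : (\sum_(Q <- qs) (h (Q :|: C) - h C) - (h ((\bigcup_(Q <- qs) Q) :|: C) - h C) = 0)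
   <-> val (fC C) qs.
  by rewrite /val /UU /fC; split => [/eqP|->]; [rewrite subr_eq0 => /eqP|rewrite subrr].
have fD : forall X, fC C (X :\: C) = fC C X.
  move=> X; rewrite /fC; congr (h _ - _); apply/setP => x; rewrite !inE.
  by case: (x \in C); rewrite ?orbT ?orbF.
rewrite (drop_lemma f0 qs fD) /can /pur /=.
set Lp := [seq _ | _ <- _ & _].
case: leqP => [/(val_small f0)//|_].
set I := II Lp; set Ps := [seq _ | _ <- Lp & _].
rewrite (key f0 fm fs Lp) -/I -/Ps.
case: eqP => [->|_]; first by rewrite f0; split => [[]|].
case: (leqP (size Ps) 1) => [sPs|_] /=; last by rewrite val_II.
rewrite val_II //.
by split => [][fI _]; split => //; apply: val_small.
Qed.
End Can.

End CombPoly.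
Import CombPoly.

Module CombBlocks.

Section Blocks.
Variables (n : nat).
Implicit Types (A B P T W : {set 'I_n}) (L : seq {set 'I_n}) (x y z : 'I_n).

Definition cnt L T := count (fun P : {set 'I_n} => P :&: T != set0) L.
Definition cx x L := count (fun P : {set 'I_n} => x \in P) L.

Definition good W L := [/\ forall P, P \in L -> P != set0,
   forall P, P \in L -> [disjoint P & W] &
   forall x, x \notin W -> (cx x L <= 1)%N].

Lemma hit2 P x y : (P :&: [set x; y] != set0) = (x \in P) || (y \in P).
Proof.
apply/set0Pn/orP => [[z]|[xP|yP]].
  by rewrite !inE => /andP[zP /orP[]/eqP zE]; [left|right]; rewrite -zE.
  by exists x; rewrite !inE xP eqxx.
by exists y; rewrite !inE yP eqxx orbT.
Qed.

Lemma cnt2 L x y : (cnt L [set x; y] + count (fun P => (x \in P) && (y \in P)) L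
   = cx x L + cx y L)%N.
Proof.
rewrite /cnt /cx -[in RHS]count_predUI; congr (_ + _)%N; apply: eq_count => P /=.
by rewrite hit2.
Qed.

Lemma two_dist (a : pred {set 'I_n}) L P1 P2 :
  P1 \in L -> P2 \in L -> P1 != P2 -> a P1 -> a P2 -> (2 <= count a L)%N.
Proof.
move=> h1 h2 ne a1 a2; rewrite -size_filter.
have -> : 2%N = size [:: P1; P2] by [].
apply: uniq_leq_size; first by rewrite /= inE ne.
by move=> P; rewrite !inE mem_filter => /orP[]/eqP->; rewrite ?a1 ?a2 ?h1 ?h2.
Qed.

Lemma good_uniq W L : good W L -> uniq L.
Proof.
case=> nz dW c1; apply: count_mem_uniq => P.
case PL: (P \in L); last by apply/count_memPn; rewrite PL.
apply/eqP; rewrite eqn_leq -has_count has_pred1 PL andbT.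
have /set0Pn[x xP] := nz _ PL.
have xW : x \notin W by move: (dW _ PL); rewrite disjoint_subset => /subsetP/(_ _ xP).
apply: leq_trans (c1 _ xW); apply: sub_count => Q /= /eqP ->; exact: xP.
Qed.

Lemma another W L P : good W L -> (2 <= size L)%N -> P \in L ->
  exists2 P2, P2 \in L & P2 != P.
Proof.
move=> gL sL PL.
case: (boolP (all (fun Q => Q == P) L)) => [/allP aL|/allPn[Q QL nQ]].
  have : (size L <= size [:: P])%N.
    by apply: uniq_leq_size (good_uniq gL) _ => Q /aL/eqP->; rewrite inE.
  by rewrite /= leqNgt sL.
by exists Q.
Qed.

Lemma mem_notW W L P x : good W L -> P \in L -> x \in P -> x \notin W.
Proof.
by case=> _ dW _ PL xP; move: (dW _ PL); rewrite disjoint_subset => /subsetP/(_ _ xP).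
Qed.

Lemma covered W L x y : x \notin W -> y \notin W -> good W L ->
  (2 <= cnt L [set x; y])%N -> exists2 P, P \in L & x \in P.
Proof.
move=> xW yW [_ _ c1] c2.
have : (0 < cx x L)%N.
  have := cnt2 L x y; have := c1 _ yW => cy e.
  rewrite lt0n; apply/eqP => c0; move: e; rewrite c0 add0n => e.
  by move: c2 cy e; move: (cnt _ _) (count _ _) (cx y L) => a b c; lia.
by rewrite -has_count => /hasP[P PL xP]; exists P.
Qed.

Lemma cnt_same W L P x z : good W L -> P \in L -> x \in P -> z \in P ->
  (cnt L [set x; z] <= 1)%N.
Proof.
move=> gL PL xP zP; have [_ _ c1] := gL.
have := cnt2 L x z.
have : (0 < count (fun P => (x \in P) && (z \in P)) L)%N.
  by rewrite -has_count; apply/hasP; exists P => //; rewrite xP zP.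
have := c1 _ (mem_notW gL PL xP); have := c1 _ (mem_notW gL PL zP).
move: (cnt L _) (count _ L) (cx x L) (cx z L) => a b c d.
lia.
Qed.

Section Pair.
Variables (W : {set 'I_n}) (L L' : seq {set 'I_n}).
Hypotheses (gL : good W L) (gL' : good W L').
Hypothesis H : forall x y, x \notin W -> y \notin W ->
  (cnt L [set x; y] <= 1)%N = (cnt L' [set x; y] <= 1)%N.

Lemma ext_pt P x : (2 <= size L)%N -> P \in L -> x \in P ->
  exists2 y, y \notin W & (2 <= cnt L [set x; y])%N.
Proof.
move=> sL PL xP; have [P2 P2L ne] := another gL sL PL.
have [nz _ _] := gL; have /set0Pn[y yP2] := nz _ P2L.
exists y; first exact: mem_notW gL P2L yP2.
rewrite /cnt; apply: (two_dist PL P2L) => /=; [by rewrite eq_sym|by rewrite hit2 xP|by rewrite hit2 yP2 orbT].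
Qed.

Lemma size2 : (2 <= size L)%N -> (2 <= size L')%N.
Proof.
move=> sL; have P1L : nth set0 L 0 \in L by apply: mem_nth; apply: leq_trans sL.
have [nz _ _] := gL; have /set0Pn[x xP] := nz _ P1L.
have [y yW c2] := ext_pt sL P1L xP.
have xW := mem_notW gL P1L xP.
have := H xW yW; rewrite leqNgt c2 /= => /esym/negbT; rewrite -ltnNge => c2'.
by apply: leq_trans c2' (count_size _ _).
Qed.

Lemma cov P x : (2 <= size L)%N -> P \in L -> x \in P ->
  exists2 P', P' \in L' & x \in P'.
Proof.
move=> sL PL xP; have [y yW c2] := ext_pt sL PL xP.
have xW := mem_notW gL PL xP.
have := H xW yW; rewrite leqNgt c2 /= => /esym/negbT; rewrite -ltnNge => c2'.
exact: covered xW yW gL' c2'.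
Qed.

Lemma subP P P' x : (2 <= size L)%N -> P \in L -> P' \in L' -> x \in P -> x \in P' ->
  P \subset P'.
Proof.
move=> sL PL P'L' xP xP'; apply/subsetP => z zP; apply/negPn/negP => zP'.
have [P'' P''L' zP''] := cov sL PL zP.
have xW := mem_notW gL PL xP; have zW := mem_notW gL PL zP.
have c2 : (2 <= cnt L' [set x; z])%N.
  rewrite /cnt; apply: (two_dist P'L' P''L') => /=; [|by rewrite hit2 xP'|by rewrite hit2 zP'' orbT].
  by apply/eqP => e; move: zP'; rewrite e zP''.
have := H xW zW; rewrite (cnt_same gL PL xP zP) leqNgt c2.
done.
Qed.

End Pair.

Lemma blocks_perm W L L' : good W L -> good W L' ->
  (forall x y, x \notin W -> y \notin W ->
    (cnt L [set x; y] <= 1)%N = (cnt L' [set x; y] <= 1)%N) ->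
  (2 <= size L)%N -> perm_eq L L'.
Proof.
move=> gL gL' H sL.
have H' : forall x y, x \notin W -> y \notin W ->
    (cnt L' [set x; y] <= 1)%N = (cnt L [set x; y] <= 1)%N.
  by move=> x y a b; rewrite H.
have sL' := size2 gL H sL.
apply: uniq_perm (good_uniq gL) (good_uniq gL') _ => P.
apply/idP/idP => PL.
  have [nz _ _] := gL; have /set0Pn[x xP] := nz _ PL.
  have [P' P'L' xP'] := cov gL gL' H sL PL xP.
  have e : P = P'.
    apply/eqP; rewrite eqEsubset (subP gL gL' H sL PL P'L' xP xP').
    exact: (subP gL' gL H' sL' P'L' PL xP' xP).
  by rewrite e.
have [nz _ _] := gL'; have /set0Pn[x xP] := nz _ PL.
have [P' P'L' xP'] := cov gL' gL H' sL' PL xP.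
have e : P = P'.
  apply/eqP; rewrite eqEsubset (subP gL' gL H' sL' PL P'L' xP xP').
  exact: (subP gL gL' H sL P'L' PL xP' xP).
by rewrite e.
Qed.

End Blocks.

End CombBlocks.
Import CombBlocks.

Module CombDir2.

Section Dir2.
Variable n : nat.
Implicit Types (A B P Q T W C : {set 'I_n}) (L qs : seq {set 'I_n}) (x y z : 'I_n) (K : cmi n).

Definition VT T K : bool := (cmi_cond K :&: T != set0) || (cnt (cmi_mems K) T <= 1)%N.

Definition pure K := all (fun Q => (Q != set0) && [disjoint Q & cmi_cond K]) (cmi_mems K).

Lemma VT_pur T K : VT T (pur K) = VT T K.
Proof.
case: K => C qs; rewrite /VT /pur /=; case: eqP => //= CT.
rewrite /cnt count_map count_filter; congr (_ <= 1)%N; apply: eq_count => Q /=.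
have e : (Q :\: C) :&: T = Q :&: T.
  apply/setP => x; rewrite !inE; case xT: (x \in T); rewrite ?andbF ?andbT //.
  case xC: (x \in C) => //=; move/setP: CT => /(_ x); rewrite !inE xC xT => //.
rewrite e; case: eqP => //= QT; apply/set0Pn.
move/eqP/set0Pn: QT => [x]; rewrite -e inE => /andP[xQ _]; by exists x.
Qed.

Lemma pur_pure K : pure (pur K).
Proof.
case: K => C qs; rewrite /pure /pur /=; apply/allP => Q.
case/mapP => Q0; rewrite mem_filter => /andP[ne _] ->; rewrite ne /=.
by rewrite disjoint_subset; apply/subsetP => x; rewrite !inE => /andP[].
Qed.

Lemma pureP K Q : pure K -> Q \in cmi_mems K -> Q != set0 /\ [disjoint Q & cmi_cond K].
Proof. by move=> /allP pK /pK /andP. Qed.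

Lemma disj_mem Q C x : [disjoint Q & C] -> x \in Q -> x \notin C.
Proof. by rewrite disjoint_subset => /subsetP h /h. Qed.

Lemma ndeg_T K : pure K -> (2 <= size (cmi_mems K))%N ->
  exists Q1, exists Q2, [/\ Q1 \in cmi_mems K, Q2 \in cmi_mems K &
   forall T, Q1 :|: Q2 \subset T -> cmi_cond K :&: T = set0 -> ~~ VT T K].
Proof.
move=> pK s2.
have [Q1 [Q2 [qs e]]] : exists Q1 Q2 qs, cmi_mems K = [:: Q1, Q2 & qs].
  by move: s2; case: (cmi_mems K) => [|Q1 [|Q2 qs]] // _; exists Q1, Q2, qs.
have m1 : Q1 \in cmi_mems K by rewrite e inE eqxx.
have m2 : Q2 \in cmi_mems K by rewrite e !inE eqxx orbT.
exists Q1, Q2; split => // T sT CT; rewrite /VT CT eqxx /= -ltnNge /cnt e /=.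
have [n1 _] := pureP pK m1; have [n2 _] := pureP pK m2.
have h1 : Q1 :&: T != set0.
  by move: n1 => /set0Pn[x xQ]; apply/set0Pn; exists x; rewrite inE xQ (subsetP sT) // inE xQ.
have h2 : Q2 :&: T != set0.
  by move: n2 => /set0Pn[x xQ]; apply/set0Pn; exists x; rewrite inE xQ (subsetP sT) // inE xQ orbT.
by rewrite h1 h2.
Qed.

Lemma deg_VT T K : (size (cmi_mems K) <= 1)%N -> VT T K.
Proof. by move=> s; rewrite /VT (leq_trans (count_size _ _) s) orbT. Qed.

Lemma II_VT K x : pure K -> (x \in II (cmi_mems K)) = ~~ VT [set x] K.
Proof.
move=> pK; rewrite /II inE /VT /cnt.
have e : count (fun Q : {set 'I_n} => Q :&: [set x] != set0) (cmi_mems K)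
   = count (fun Q : {set 'I_n} => x \in Q) (cmi_mems K).
  apply: eq_count => Q /=; apply/set0Pn/idP => [[y]|xQ].
    by rewrite !inE => /andP[yQ /eqP <-].
  by exists x; rewrite !inE xQ eqxx.
rewrite e; case xC: (x \in cmi_cond K).
  have -> : cmi_cond K :&: [set x] != set0 by apply/set0Pn; exists x; rewrite !inE xC eqxx.
  rewrite /= (_ : count _ _ = 0)%N //; apply/eqP; rewrite -leqn0 leqNgt -has_count.
  apply/hasP => [[Q QK xQ]]; have [_ d] := pureP pK QK.
  by move: (disj_mem d xQ); rewrite xC.
have -> : (cmi_cond K :&: [set x] != set0) = false.
  apply/negbTE; rewrite negbK; apply/eqP/setP => y; rewrite !inE.
  by case: (y =P x) => [->|]; rewrite ?xC ?andbF ?andbT.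
by rewrite /= -ltnNge.
Qed.

Lemma pure_disjU K Q1 Q2 : pure K -> Q1 \in cmi_mems K -> Q2 \in cmi_mems K ->
  cmi_cond K :&: (Q1 :|: Q2) = set0.
Proof.
move=> pK m1 m2; have [_ d1] := pureP pK m1; have [_ d2] := pureP pK m2.
apply/setP => x; rewrite !inE; case xC: (x \in cmi_cond K) => //=.
by apply/negbTE; rewrite negb_or; apply/andP; split; apply/negP => xQ;
  [move: (disj_mem d1 xQ)|move: (disj_mem d2 xQ)]; rewrite xC.
Qed.

Lemma deg_same K K' : pure K' -> (forall T, VT T K = VT T K') ->
  (size (cmi_mems K) <= 1)%N -> (size (cmi_mems K') <= 1)%N.
Proof.
move=> pK' H s; rewrite leqNgt; apply/negP => s'.
have [Q1 [Q2 [m1 m2 hT]]] := ndeg_T pK' s'.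
have := hT _ (subxx _) (pure_disjU pK' m1 m2).
by rewrite -H deg_VT.
Qed.

Lemma C_sub K K' : pure K' -> (2 <= size (cmi_mems K'))%N ->
  (forall T, VT T K = VT T K') -> cmi_cond K \subset cmi_cond K'.
Proof.
move=> pK' s' H; apply/subsetP => j jC; apply/negPn/negP => jC'.
have [Q1 [Q2 [m1 m2 hT]]] := ndeg_T pK' s'.
have CT : cmi_cond K' :&: (j |: (Q1 :|: Q2)) = set0.
  rewrite setIUr (pure_disjU pK' m1 m2) setU0; apply/setP => y; rewrite !inE.
  by case: (y =P j) => [->|]; rewrite ?(negbTE jC') ?andbF ?andbT.
have := hT _ (subsetUr _ _) CT; rewrite -H /VT.
have -> // : cmi_cond K :&: (j |: (Q1 :|: Q2)) != set0.
by apply/set0Pn; exists j; rewrite !inE jC eqxx.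
Qed.

Definition PsOf qs := [seq Q :\: II qs | Q <- qs & Q :\: II qs != set0].

Lemma good_Ps K : pure K ->
  good (cmi_cond K :|: II (cmi_mems K)) (PsOf (cmi_mems K)).
Proof.
move=> pK; split.
- by move=> P /mapP[Q]; rewrite mem_filter => /andP[ne _] ->.
- move=> P /mapP[Q]; rewrite mem_filter => /andP[_ QK] ->.
  have [_ d] := pureP pK QK.
  rewrite disjoint_subset; apply/subsetP => x; rewrite !inE negb_or => /andP[xI xQ].
  by rewrite xI andbT (disj_mem d xQ).
- move=> x; rewrite !inE negb_or => /andP[xC xI].
  rewrite /cx /PsOf count_map count_filter.
  apply: leq_trans (_ : count (fun Q : {set 'I_n} => x \in Q) (cmi_mems K) <= 1)%N.
    by apply: sub_count => Q /= /andP[]; rewrite inE => /andP[].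
  by move: xI; rewrite -ltnNge.
Qed.

Lemma cnt_Ps K x y : pure K -> x \notin cmi_cond K :|: II (cmi_mems K) ->
  y \notin cmi_cond K :|: II (cmi_mems K) ->
  (cnt (PsOf (cmi_mems K)) [set x; y] <= 1)%N = VT [set x; y] K.
Proof.
rewrite in_setU negb_or => pK /andP[xC xI].
rewrite in_setU negb_or => /andP[yC yI].
rewrite /VT.
have -> : (cmi_cond K :&: [set x; y] != set0) = false.
  apply/negbTE; rewrite negbK; apply/eqP/setP => z; rewrite !inE.
  case: (boolP (z \in cmi_cond K)) => //= zC; apply/negbTE; rewrite negb_or.
  by apply/andP; split; apply/negP => /eqP e; [move: xC|move: yC]; rewrite -e zC.
rewrite /= /cnt /PsOf count_map count_filter; congr (_ <= 1)%N; apply: eq_count => Q /=.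
rewrite !hit2 !in_setD (negbTE xI) (negbTE yI) /=.
case h: ((x \in Q) || (y \in Q)); rewrite ?andbF //=; apply/set0Pn.
by case/orP: h => h; [exists x|exists y]; rewrite in_setD h ?xI ?yI.
Qed.

Lemma dir2_pure K K' : pure K -> pure K' -> (forall T, VT T K = VT T K') ->
  canform_eq (can K) (can K').
Proof.
move=> pK pK' H.
have H' : forall T, VT T K' = VT T K by move=> T; rewrite H.
rewrite /can.
case: (leqP (size (cmi_mems K)) 1) => [s|s].
  by rewrite (deg_same pK' H s).
case: (leqP (size (cmi_mems K')) 1) => [s'|s'].
  by have := deg_same pK H' s'; rewrite leqNgt s.
have eC : cmi_cond K = cmi_cond K'.
  by apply/eqP; rewrite eqEsubset (C_sub pK' s' H) (C_sub pK s H').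
have eI : II (cmi_mems K) = II (cmi_mems K').
  by apply/setP => x; rewrite !II_VT // H.
have gP := good_Ps pK; have gP' := good_Ps pK'.
rewrite -eC -eI in gP'.
have HB : forall x y, x \notin cmi_cond K :|: II (cmi_mems K) ->
    y \notin cmi_cond K :|: II (cmi_mems K) ->
    (cnt (PsOf (cmi_mems K)) [set x; y] <= 1)%N = (cnt (PsOf (cmi_mems K')) [set x; y] <= 1)%N.
  move=> x y hx hy; rewrite !cnt_Ps // ?H // -?eC -?eI //.
have sPs : (2 <= size (PsOf (cmi_mems K)))%N -> (2 <= size (PsOf (cmi_mems K')))%N.
  exact: size2 gP HB.
have sPs' : (2 <= size (PsOf (cmi_mems K')))%N -> (2 <= size (PsOf (cmi_mems K)))%N.
  by apply: size2 gP' _ => x y hx hy; rewrite HB.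
rewrite -eC -/(PsOf (cmi_mems K)) -/(PsOf (cmi_mems K')) -eI.
case: eqP => [I0|_].
  have sP : (2 <= size (PsOf (cmi_mems K)))%N.
    rewrite /PsOf size_map size_filter I0.
    rewrite (eq_in_count (a2 := predT)) ?count_predT // => Q QK /=.
    by rewrite setD0; have [] := pureP pK QK.
  by split => //; apply: blocks_perm gP gP' HB sP.
case: (leqP (size (PsOf (cmi_mems K))) 1) => [a|a];
  case: (leqP (size (PsOf (cmi_mems K'))) 1) => [b|b] //=.
- by have := sPs' b; rewrite ltnNge a.
- by have := sPs a; rewrite ltnNge b.
by split => //; rewrite !perm_cons; apply: blocks_perm gP gP' HB a.
Qed.

Lemma dir2 K K' : (forall T, VT T K = VT T K') -> canform_eq (can (pur K)) (can (pur K')).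
Proof.
move=> H; apply: dir2_pure; rewrite ?pur_pure // => T.
by rewrite !VT_pur.
Qed.

End Dir2.

End CombDir2.
Import CombDir2.

From mathcomp Require Import boolp classical_sets functions fsbigop reals ereal esum exp.
From mathcomp Require Import Rstruct.
From mathcomp Require Import ring lra.

Module AnEsum.
Import Order.TTheory GRing.Theory Num.Theory.
Local Open Scope classical_set_scope.
Local Open Scope ring_scope.

Section EsumExtra.
Variable R : realType.
Local Open Scope ereal_scope.

Lemma esumZl (T : choiceType) (S : set T) (c : R) (a : T -> \bar R) :
  (0 <= c)%R -> (forall x, 0 <= a x) ->
  \esum_(i in S) (c%:E * a i) = c%:E * \esum_(i in S) a i.
Proof.
move=> c0 a0; rewrite /esum -ereal_supZl //; last first.
  by apply/set0P; exists 0; exists set0; [exact: fsets_set0|rewrite fsbig_set0].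
congr ereal_sup; apply/seteqP; split => [y [X [finX XS] <-]|y [z [X [finX XS] <-] <-]].
  exists (\sum_(i \in X) a i); first by exists X.
  by rewrite !fsbig_finite // ge0_sume_distrr.
exists X; first by [].
by rewrite !fsbig_finite // ge0_sume_distrr.
Qed.

Lemma esum_swap (T1 T2 : choiceType) (a : T1 -> T2 -> \bar R) :
  (forall i j, 0 <= a i j) ->
  \esum_(i in [set: T1]) \esum_(j in [set: T2]) a i j =
  \esum_(j in [set: T2]) \esum_(i in [set: T1]) a i j.
Proof.
move=> a0; rewrite !esum_esum //.
rewrite (reindex_esum ([set: T2] `*`` (fun=> [set: T1])) _ (fun x => (x.2, x.1))) //.
split.
- by move=> [x y] _.
- by move=> [x1 y1] [x2 y2] _ _ [-> ->].
- by move=> [x y] _; exists (y, x).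
Qed.

Lemma group (T U : choiceType) (p : T -> R) (f : T -> U) (g : U -> R) :
  (forall x, 0 <= p x)%R -> (forall u, 0 <= g u)%R ->
  (forall u, \esum_(x in [set x | f x = u]) (p x)%:E \is a fin_num) ->
  \esum_(x in [set: T]) (p x * g (f x))%:E =
  \esum_(u in [set: U]) (fine (\esum_(x in [set x | f x = u]) (p x)%:E) * g u)%:E.
Proof.
move=> p0 g0 fin.
transitivity (\esum_(u in [set: U]) \esum_(x in [set x | f x = u]) (g u * p x)%:E); last first.
  apply: eq_esum => u _; rewrite EFinM fineK // muleC -esumZl //.
rewrite esum_esum; first last.
  by move=> u x _ _; rewrite lee_fin mulr_ge0.

rewrite (reindex_esum [set: T] _ (fun x => (f x, x))) //=.
  by apply: eq_esum => x _; rewrite mulrC.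
split.
- by move=> x _.
- by move=> x y _ _ [].
- by move=> [u x] [_ /= <-]; exists x.
Qed.

Lemma esum_subT (T : choiceType) (S : set T) (a : T -> \bar R) :
  (forall x, 0 <= a x) -> \esum_(x in S) a x <= \esum_(x in [set: T]) a x.
Proof.
move=> a0; rewrite esum_mkcond; apply: le_esum => x _.
by case: ifP.
Qed.

End EsumExtra.

End AnEsum.
Import AnEsum.

Module AnEnt.
Import Order.TTheory GRing.Theory Num.Theory.
Local Open Scope classical_set_scope.
Local Open Scope ring_scope.

Section Ent.
Variables (R : realType) (n : nat) (p : outcome n -> R).
Hypothesis p0 : forall x, (0 <= p x)%R.
Hypothesis psum : (\esum_(x in [set: outcome n]) (p x)%:E = 1)%E.
Implicit Types (A B : {set 'I_n}) (x y : outcome n).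

Lemma esum_sub (T : choiceType) (S1 S2 : set T) (a : T -> \bar R) :
  (forall t, 0 <= a t)%E -> S1 `<=` S2 -> (\esum_(t in S1) a t <= \esum_(t in S2) a t)%E.
Proof.
move=> a0 sS; rewrite esum_mkcond [X in (_ <= X)%E]esum_mkcond; apply: le_esum => x _.
case: ifP => h1; case: ifP => h2 //.
by move: h1 h2; rewrite !inE => /sS h /negP; rewrite inE.
Qed.

Lemma pE0 x : (0 <= (p x)%:E)%E. Proof. by rewrite lee_fin. Qed.

Lemma marg_ge0 A y : (0 <= marg p A y)%E.
Proof. by apply: esum_ge0 => x _; apply: pE0. Qed.

Lemma marg_le1 A y : (marg p A y <= 1)%E.
Proof. by rewrite -psum; apply: esum_subT pE0. Qed.

Lemma marg_fin A y : marg p A y \is a fin_num.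
Proof.
by rewrite ge0_fin_numE ?marg_ge0 // (le_lt_trans (marg_le1 A y)) // ltry.
Qed.

Definition mm A x := fine (marg p A (restr A x)).

Lemma mmE A x : (mm A x)%:E = marg p A (restr A x).
Proof. by rewrite fineK // marg_fin. Qed.

Lemma mm_ge0 A x : 0 <= mm A x.
Proof. by rewrite -lee_fin mmE marg_ge0. Qed.

Lemma mm_le1 A x : mm A x <= 1.
Proof. by rewrite -lee_fin mmE marg_le1. Qed.

Lemma mm_ge_p A x : p x <= mm A x.
Proof.
rewrite -lee_fin mmE /marg -(@esum_set1 _ _ x (fun y => (p y)%:E) (pE0 x)).
by apply: esum_sub => [y|y ->]; [exact: pE0|].
Qed.

Lemma restr_sub A B x y : A \subset B -> restr B y = restr B x -> restr A y = restr A x.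
Proof.
move=> sAB /ffunP e; apply/ffunP => i; rewrite !ffunE.
case: ifP => // iA; move: (e i); rewrite !ffunE.
by rewrite (fintype.subsetP sAB _ iA).
Qed.

Lemma mm_anti A B x : A \subset B -> mm B x <= mm A x.
Proof.
move=> sAB; rewrite -lee_fin !mmE /marg.
by apply: esum_sub => [y|y /= e]; [exact: pE0|exact: restr_sub e].
Qed.

Lemma entropyE A : entropy p A = (\esum_(x in [set: outcome n]) (p x * - ln (mm A x))%:E)%E.
Proof.
rewrite /entropy (group (f := restr A) (g := fun y => - ln (fine (marg p A y)))) //.
- by apply: eq_esum => y _; rewrite /eta /marg mulrN.
- by move=> y; rewrite oppr_ge0 ln_le0 // -lee_fin fineK ?marg_fin ?marg_le1.
- by move=> y; apply: marg_fin.
Qed.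

Lemma entropy_mono A B : A \subset B -> (entropy p A <= entropy p B)%E.
Proof.
move=> sAB; rewrite !entropyE; apply: le_esum => x _; rewrite lee_fin.
have [px0|px0] := eqVneq (p x) 0; first by rewrite px0 !mul0r.
have ppos : 0 < p x by rewrite lt0r px0 p0.
rewrite ler_pM2l // lerN2 ler_ln ?mm_anti // posrE.
  by apply: lt_le_trans (mm_ge_p _ _).
by apply: lt_le_trans ppos (le_trans (mm_ge_p B x) (mm_anti x sAB)).
Qed.

Lemma mm_restr A x y : restr A x = restr A y -> mm A x = mm A y.
Proof. by rewrite /mm => ->. Qed.

Definition w A x y := if restr A y == restr A x then p y else 0.

Lemma w_ge0 A x y : 0 <= w A x y.
Proof. by rewrite /w; case: ifP. Qed.

Lemma mmT A x : (mm A x)%:E = (\esum_(y in [set: outcome n]) (w A x y)%:E)%E.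
Proof.
rewrite mmE /marg esum_mkcond; apply: eq_esum => y _.
rewrite /w; case: ifPn => [/set_mem/= ->|/negP h]; first by rewrite eqxx.
case: eqP => // e; case: h; exact: mem_set.
Qed.

Lemma restr_U A B x y : restr (A :|: B) x = restr (A :|: B) y <->
  restr A x = restr A y /\ restr B x = restr B y.
Proof.
split => [e|[/ffunP e1 /ffunP e2]].
  by split; [apply: (restr_sub (finset.subsetUl A B) e)|apply: (restr_sub (finset.subsetUr A B) e)].
apply/ffunP => i; rewrite !ffunE finset.in_setU.
move: (e1 i) (e2 i); rewrite !ffunE.
by case: (i \in A); case: (i \in B).
Qed.

Section Sub.
Variables A B : {set 'I_n}.
Let Z := A :&: B.
Let U := A :|: B.

Definition cq x := p x / (mm Z x * mm U x).
Definition qq x := mm A x * mm B x / (mm Z x * mm U x).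

Lemma cq_ge0 x : 0 <= cq x.
Proof. by rewrite /cq divr_ge0 ?mulr_ge0 ?mm_ge0. Qed.

Definition G y z := if restr Z z == restr Z y then p y * p z / mm Z y else 0.

Lemma G_ge0 y z : 0 <= G y z.
Proof. by rewrite /G; case: ifP => // _; rewrite divr_ge0 ?mulr_ge0 ?mm_ge0. Qed.

Lemma inner_bound y z :
  (\esum_(x in [set: outcome n]) (cq x * w A x y * w B x z)%:E <= (G y z)%:E)%E.
Proof.
case: (pselect (exists x0, restr A y = restr A x0 /\ restr B z = restr B x0)) => [[x0 [ey ez]]|nex].
  have eZ : restr Z z = restr Z y.
    rewrite (restr_sub (finset.subsetIr A B) ez) -(restr_sub (finset.subsetIl A B) ey) //.
  pose k := p y * p z / (mm Z y * mm U x0).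
  have -> : (\esum_(x in [set: outcome n]) (cq x * w A x y * w B x z)%:E = \esum_(x in [set: outcome n]) (k * w U x0 x)%:E)%E.
    apply: eq_esum => x _; rewrite /w.
    case: eqP => [eA|nA]; last first.
      rewrite mulr0 mul0r; case: eqP => [/restr_U [eA' _]|]; last by rewrite mulr0.
      by case: nA; rewrite ey eA'.
    case: eqP => [eB|nB]; last first.
      rewrite mulr0; case: eqP => [/restr_U [_ eB']|]; last by rewrite mulr0.
      by case: nB; rewrite ez eB'.
    have eU : restr U x = restr U x0.
      by apply/restr_U; split; [rewrite -eA|rewrite -eB].
    rewrite eU eqxx /cq /k -(mm_restr (restr_sub (finset.subsetIl A B) eA)) (mm_restr eU).
    congr (_ %:E).
    rewrite -/Z; ring.
  under eq_esum do rewrite EFinM.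
  rewrite esumZl; [|by rewrite /k divr_ge0 ?mulr_ge0 ?mm_ge0|by move=> x; rewrite lee_fin w_ge0].
  rewrite -mmT -EFinM lee_fin /G eZ eqxx /k.
  have [->|nz] := eqVneq (mm U x0) 0.
    by rewrite !mulr0 ?invr0 ?mulr0 ?mul0r ?mulr0 ?divr_ge0 ?mulr_ge0 ?mm_ge0.
  have -> : p y * p z / (mm Z y * mm U x0) * mm U x0 =
     (p y * p z / mm Z y) * ((mm U x0)^-1 * mm U x0) by rewrite invfM; ring.
  by rewrite mulVf // mulr1.
rewrite esum1 ?lee_fin ?G_ge0 // => x _; rewrite /w.
case: eqP => [eA|]; last by rewrite mulr0 mul0r.
case: eqP => [eB|]; last by rewrite mulr0.
by case: nex; exists x.
Qed.

Lemma qq_ge0 x : 0 <= qq x.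
Proof. by rewrite /qq divr_ge0 ?mulr_ge0 ?mm_ge0. Qed.

Lemma pq_expand x : ((p x * qq x)%:E =
  \esum_(y in [set: outcome n]) \esum_(z in [set: outcome n]) (cq x * w A x y * w B x z)%:E)%E.
Proof.
have -> : p x * qq x = mm B x * cq x * mm A x by rewrite /cq /qq; ring.
have h : forall y, (\esum_(z in [set: outcome n]) (cq x * w A x y * w B x z)%:E =
    (mm B x)%:E * (cq x * w A x y)%:E)%E.
  move=> y; rewrite mmT muleC -esumZl; last by move=> z; rewrite lee_fin w_ge0.
    by apply: eq_esum => z _; rewrite -EFinM mulrC.
  by rewrite mulr_ge0 ?cq_ge0 ?w_ge0.
rewrite (eq_esum (fun y _ => h y)) esumZl ?mm_ge0 //; last first.
  by move=> y; rewrite lee_fin mulr_ge0 ?cq_ge0 ?w_ge0.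
under eq_esum do rewrite EFinM.
rewrite esumZl ?cq_ge0 //; last by move=> y; rewrite lee_fin w_ge0.
by rewrite -mmT -!EFinM mulrA.
Qed.

Lemma qsum : (\esum_(x in [set: outcome n]) (p x * qq x)%:E <= 1)%E.
Proof.
have T0 : forall x y z, (0 <= (cq x * w A x y * w B x z)%:E)%E.
  move=> x y z; rewrite lee_fin; apply: mulr_ge0; [apply: mulr_ge0|]; rewrite ?cq_ge0 ?w_ge0 //.
under eq_esum do rewrite pq_expand.
rewrite esum_swap; last by move=> x y; apply: esum_ge0 => z _.
under eq_esum do rewrite esum_swap //.
apply: le_trans (_ : (\esum_(y in [set: outcome n]) \esum_(z in [set: outcome n]) (G y z)%:E <= 1)%E).
  by apply: le_esum => y _; apply: le_esum => z _; apply: inner_bound.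
have hG : forall y, (\esum_(z in [set: outcome n]) (G y z)%:E <= (p y)%:E)%E.
  move=> y.
  have -> : (\esum_(z in [set: outcome n]) (G y z)%:E =
      (p y / mm Z y)%:E * \esum_(z in [set: outcome n]) (w Z y z)%:E)%E.
    rewrite -esumZl; last by move=> z; rewrite lee_fin w_ge0.
      apply: eq_esum => z _; rewrite /G /w -EFinM.
      by case: eqP => _; rewrite ?mulr0 // mulrAC.
    by rewrite divr_ge0 ?mm_ge0.
  rewrite -mmT -EFinM lee_fin.
  have [->|nz] := eqVneq (mm Z y) 0; first by rewrite mulr0.
  by rewrite -mulrA mulVf // mulr1.
by rewrite -psum; apply: le_esum => y _; apply: hG.
Qed.

Lemma pointwise x :
  p x * - ln (mm U x) + p x * - ln (mm Z x) + p x <=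
  p x * - ln (mm A x) + p x * - ln (mm B x) + p x * qq x.
Proof.
have [px0|px0] := eqVneq (p x) 0; first by rewrite px0 !mul0r !addr0.
have ppos : 0 < p x by rewrite lt0r px0 p0.
have pos : forall C, 0 < mm C x by move=> C; apply: lt_le_trans ppos (mm_ge_p C x).
have t0 : 0 < qq x by rewrite /qq divr_gt0 ?mulr_gt0 ?pos.
have lt : ln (qq x) = ln (mm A x) + ln (mm B x) - (ln (mm Z x) + ln (mm U x)).
  have e : ln (mm A x * mm B x / (mm Z x * mm U x)) = ln (mm A x * mm B x) - ln (mm Z x * mm U x).
    by apply: ln_div; rewrite posrE mulr_gt0 ?pos.
  rewrite /qq e.
  by rewrite !lnM ?posrE ?pos.
have h : ln (qq x) <= qq x - 1.
  have := @le_ln1Dx R (qq x - 1); rewrite addrCA subrr addr0; apply.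
  move: t0; move: (qq x) => t t0; lra.
have := ler_wpM2l (p0 x) h; rewrite lt.
move: (ln (mm A x)) (ln (mm B x)) (ln (mm Z x)) (ln (mm U x)) (qq x) (p x) => a b c d t P.
move=> H; nra.
Qed.

Lemma term_ge0 C x : 0 <= p x * - ln (mm C x).
Proof. by rewrite mulr_ge0 // oppr_ge0 ln_le0 // mm_le1. Qed.

Lemma entropy_sub : (entropy p U + entropy p Z <= entropy p A + entropy p B)%E.
Proof.
have H : (\esum_(x in [set: outcome n])
    ((p x * - ln (mm U x))%:E + (p x * - ln (mm Z x))%:E + (p x)%:E) <=
  \esum_(x in [set: outcome n])
    ((p x * - ln (mm A x))%:E + (p x * - ln (mm B x))%:E + (p x * qq x)%:E))%E.
  by apply: le_esum => x _; rewrite -!EFinD lee_fin pointwise.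
have g1 : forall C x, (0 <= (p x * - ln (mm C x))%:E)%E by move=> C x; rewrite lee_fin term_ge0.
have g2 : forall x, (0 <= (p x * qq x)%:E)%E by move=> x; rewrite lee_fin mulr_ge0 ?qq_ge0.
rewrite !esumD in H; try by move=> x _; rewrite ?adde_ge0 ?g1 ?g2 ?lee_fin ?p0.
rewrite -!entropyE psum in H.
rewrite -(leeD2rE _ _ (fin_numE 1%E)).
apply: (le_trans H); apply: leeD2l; exact: qsum.
Qed.

End Sub.

Lemma entropy_ge0 A : (0 <= entropy p A)%E.
Proof. by rewrite entropyE; apply: esum_ge0 => x _; rewrite lee_fin term_ge0. Qed.

Lemma entropy0 : entropy p finset.set0 = 0%E.
Proof.
rewrite entropyE esum1 // => x _.
have -> : mm finset.set0 x = 1.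
  apply/eqP; rewrite -(@eqe R) mmE /marg -psum; apply/eqP; congr esum.
  apply/seteqP; split => y // _; apply/ffunP => i; rewrite !ffunE.
  by rewrite finset.in_set0.
by rewrite ln1 oppr0 mulr0.
Qed.

Lemma entropy_fin : (forall i, (entropy p [set i] < +oo)%E) ->
  forall A, entropy p A \is a fin_num.
Proof.
move=> hi A.
have -> : A = \bigcup_(i <- enum A) [set i].
  apply/setP => y; rewrite -mem_enum; elim: (enum A) => [|j s IH].
    by rewrite big_nil finset.in_set0.
  by rewrite big_cons finset.in_setU finset.in_set1 -IH in_cons.
elim: (enum A) => [|i s IH]; first by rewrite big_nil entropy0.
rewrite big_cons ge0_fin_numE ?entropy_ge0 //.
apply: le_lt_trans (_ : (entropy p [set i] + entropy p (\bigcup_(j <- s) [set j]) < +oo)%E).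
  apply: le_trans (entropy_sub _ _).
  by rewrite leeDl // entropy_ge0.
rewrite lte_add_pinfty // -ge0_fin_numE ?entropy_ge0 //.
Qed.

Lemma h_mono : (forall i, (entropy p [set i] < +oo)%E) ->
  forall A B, A \subset B -> fine (entropy p A) <= fine (entropy p B).
Proof.
move=> hi A B sAB; rewrite fine_le ?entropy_fin //; exact: entropy_mono.
Qed.

Lemma h_sub : (forall i, (entropy p [set i] < +oo)%E) ->
  forall A B, fine (entropy p (A :|: B)) + fine (entropy p (A :&: B)) <=
     fine (entropy p A) + fine (entropy p B).
Proof.
move=> hi A B; rewrite -!fineD ?entropy_fin // fine_le ?fin_numD ?entropy_fin //.
exact: entropy_sub.
Qed.

End Ent.

End AnEnt.
Import AnEnt.

Module AnTwo.
Import Order.TTheory GRing.Theory Num.Theory.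
Local Open Scope classical_set_scope.
Local Open Scope ring_scope.

Section Two.
Variables (R : realType) (n : nat) (T : {set 'I_n}).
Hypothesis Tne : T != finset.set0.

Lemma esum_two (U : choiceType) (u v : U) (a : U -> \bar R) (S : set U) :
  u != v -> (forall x, (0 <= a x)%E) -> (forall x, x != u -> x != v -> a x = 0%E) ->
  \esum_(x in S) a x = ((if u \in S then a u else 0) + (if v \in S then a v else 0))%E.
Proof.
move=> uv a0 a1.
rewrite (esumID [set u]) // (esumID [set v] (S `&` ~` [set u])) //.
rewrite [X in (_ + (_ + X))%E]esum1 ?adde0; last first.
  move=> x [[_ /eqP xu] /eqP xv]; exact: a1.
congr (_ + _)%E.
  case: ifPn => uS.
    have -> : S `&` [set u] = [set u].
      by apply/seteqP; split => [x [_ ->]|x ->] //; split => //; exact: set_mem uS.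
    by rewrite esum_set1.
  by rewrite esum1 // => x [Sx xu]; case/negP: uS; rewrite -xu; exact: mem_set.
case: ifPn => vS.
  have -> : S `&` ~` [set u] `&` [set v] = [set v].
    apply/seteqP; split => [x [_ ->]|x ->] //; split => //; split; first exact: set_mem vS.
    by move=> /= e; move: uv; rewrite e eqxx.
  by rewrite esum_set1.
by rewrite esum1 // => x [[Sx _] xv]; case/negP: vS; rewrite -xv; exact: mem_set.
Qed.

Implicit Types (A : {set 'I_n}) (x y : outcome n).
Definition o0 : outcome n := [ffun => 0%N].
Definition o1 : outcome n := [ffun i => if i \in T then 1%N else 0%N].

Lemma o01 : o0 != o1.
Proof.
case/set0Pn: Tne => i iT; apply/eqP => /ffunP/(_ i); rewrite !ffunE iT.
by [].
Qed.

Definition pT (x : outcome n) : R := if x == o0 then 2^-1 else if x == o1 then 2^-1 else 0.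

Lemma pT0 x : 0 <= pT x.
Proof. by rewrite /pT; case: ifP => _; [|case: ifP => _]; rewrite ?invr_ge0 ?ler0n. Qed.

Lemma pTo0 : pT o0 = 2^-1. Proof. by rewrite /pT eqxx. Qed.
Lemma pTo1 : pT o1 = 2^-1. Proof. by rewrite /pT eq_sym (negbTE o01) eqxx. Qed.

Lemma esum_pT (S : set (outcome n)) :
  \esum_(x in S) (pT x)%:E = ((if o0 \in S then 2^-1 else 0)%:E + (if o1 \in S then 2^-1 else 0)%:E)%E.
Proof.
rewrite (esum_two _ o01) ?pTo0 ?pTo1.
- by case: ifP; case: ifP.
- by move=> x; rewrite lee_fin pT0.
- by move=> x /negbTE h0 /negbTE h1; rewrite /pT h0 h1.
Qed.

Lemma pT_sum : \esum_(x in [set: outcome n]) (pT x)%:E = 1%E.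
Proof.
rewrite esum_pT !in_setT -EFinD; congr (_%:E).
by rewrite [RHS](splitr 1) mul1r.
Qed.

Lemma restr_o A : (restr A o1 == restr A o0) = (A :&: T == finset.set0).
Proof.
apply/eqP/eqP => [/ffunP e|e].
  apply/setP => i; rewrite finset.in_setI finset.in_set0.
  move: (e i); rewrite !ffunE; case: (i \in A) => //=; by case: (i \in T).
apply/ffunP => i; rewrite !ffunE; case iA: (i \in A) => //; case iT: (i \in T) => //.
by move/setP: e => /(_ i); rewrite finset.in_setI finset.in_set0 iA iT.
Qed.

Lemma in_fib A x y : (x \in [set z | restr A z = restr A y]) = (restr A x == restr A y).
Proof. by apply/idP/eqP => [/set_mem //|e]; apply: mem_set. Qed.

Definition dT A : R := if A :&: T == finset.set0 then 2^-1 else 0.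

Lemma mm_o0 A : mm pT A o0 = 2^-1 + dT A.
Proof.
rewrite /mm /marg esum_pT !in_fib eqxx restr_o -EFinD /=.
by rewrite /dT; case: ifP.
Qed.

Lemma mm_o1 A : mm pT A o1 = 2^-1 + dT A.
Proof.
rewrite /mm /marg esum_pT !in_fib eqxx eq_sym restr_o -EFinD /=.
by rewrite /dT addrC; case: ifP.
Qed.

Lemma entropy_pT A : entropy pT A = (if A :&: T == finset.set0 then 0 else ln 2)%:E.
Proof.
rewrite (entropyE pT0 pT_sum) (esum_two _ o01); last 2 first.
- by move=> x; rewrite lee_fin (term_ge0 pT0 pT_sum).
- by move=> x /negbTE h0 /negbTE h1; rewrite /pT h0 h1 mul0r.
rewrite !in_setT pTo0 pTo1 mm_o0 mm_o1 /dT -EFinD; congr (_%:E).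
have h2 : 2^-1 + 2^-1 = 1 :> R by rewrite [RHS](splitr 1) mul1r.
case: ifP => _; first by rewrite h2 ln1 oppr0 mulr0 addr0.
have l2 : ln (2^-1) = - ln 2 :> R by apply: lnV; rewrite posrE ltr0n.
by rewrite addr0 l2 opprK -mulrDl h2 mul1r.
Qed.

Lemma pT_joint : is_joint_dist pT.
Proof.
split; [exact: pT0|split; first exact: pT_sum].
by move=> i; rewrite entropy_pT ltry.
Qed.

Lemma hE X : fine (entropy pT X) = (X :&: T != finset.set0)%:R * ln 2.
Proof. by rewrite entropy_pT /=; case: eqP => _; rewrite ?mul0r ?mul1r. Qed.

Lemma ln2_neq0 : ln 2 != 0 :> R.
Proof. by rewrite gt_eqF // ln_gt0 // ltr1n. Qed.

Lemma aux_cnt (qs : seq {set 'I_n}) : (\sum_(Q <- qs) ((Q :&: T != finset.set0)%:R * ln 2) =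
    (cnt qs T)%:R * ln 2 :> R) /\
  (((\bigcup_(Q <- qs) Q) :&: T != finset.set0) = (0 < cnt qs T)%N).
Proof.
rewrite /cnt; elim: qs => [|Q qs [IH1 IH2]].
  by rewrite !big_nil mul0r finset.set0I eqxx.
rewrite !big_cons /= IH1 finset.setIUl finset.setU_eq0 negb_and IH2 natrD mulrDl.
by split => //; case: (Q :&: T != finset.set0); rewrite //= add1n.
Qed.

Lemma valid_pT K : cmi_valid pT K <-> VT T K.
Proof.
case: K => C qs; rewrite /cmi_valid /centropy /VT /=.
case: (boolP (C :&: T != finset.set0)) => cT /=.
  have z : forall X, fine (entropy pT (X :|: C)) - fine (entropy pT C) = 0.
    move=> X; rewrite !hE cT (_ : (X :|: C) :&: T != finset.set0) ?subrr //.
    case/finset.set0Pn: cT => i; rewrite finset.in_setI => /andP[iC iT].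
    by apply/finset.set0Pn; exists i; rewrite finset.in_setI finset.in_setU iC iT orbT.
  by rewrite z big1 ?subrr // => Q _; rewrite z.
have eX : forall X, (X :|: C) :&: T = X :&: T.
  move=> X; rewrite finset.setIUl; move/negPn/eqP: cT => ->; by rewrite finset.setU0.
have hC : fine (entropy pT C) = 0 by rewrite hE (negbTE cT) mul0r.
under eq_bigr do rewrite hE eX hC subr0.
rewrite hE eX hC subr0.
have aux := aux_cnt qs.
case: aux => -> ->; rewrite -mulrBl; split => [/eqP|].
  rewrite mulf_eq0 (negbTE ln2_neq0) orbF subr_eq0 eqr_nat.
  by case: (cnt qs T) => [|[|c]].
by case: (cnt qs T) => [|[|c]] //= _; rewrite ?subrr ?mul0r.
Qed.

End Two.

End AnTwo.
Import AnTwo.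

Import Order.TTheory GRing.Theory Num.Theory.

Lemma VT_set0 n (K : cmi n) : VT finset.set0 K.
Proof.
rewrite /VT /cnt (eq_count (a2 := pred0)) ?count_pred0 ?orbT // => Q.
by rewrite /= finset.setI0 eqxx.
Qed.

Theorem mainTheorem2 (n : nat) (K K' : cmi n) :
  cmi_equiv K K' <-> canform_eq (can (pur K)) (can (pur K')).
Proof.
split.
- move=> E; apply: dir2 => T.
  case: (eqVneq T finset.set0) => [->|Tne]; first by rewrite !VT_set0.
  apply/idP/idP => h.
    apply/(@valid_pT Rdefinitions.R _ _ Tne); apply/(E _ (@pT_joint Rdefinitions.R _ _ Tne)).
    exact/(@valid_pT Rdefinitions.R _ _ Tne).
  apply/(@valid_pT Rdefinitions.R _ _ Tne); apply/(E _ (@pT_joint Rdefinitions.R _ _ Tne)).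
  exact/(@valid_pT Rdefinitions.R _ _ Tne).
- move=> ce p jd; have [p0 [psum hfin]] := jd.
  have hm := h_mono p0 psum hfin; have hs := h_sub p0 psum hfin.
  rewrite /cmi_valid /centropy.
  rewrite (valid_can hm hs K) (valid_can hm hs K').
  exact: canform_eq_cval ce.
Qed.
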